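(* Let $(D,\sqsubseteq)$ be a dcpo with its Scott topology and let $A\in\mathbf{\Sigma}^0_2(D)$. If $(x_i)_{i\in I}$ is a family indexed by a directed preordered set $I$ with $i\le j\Rightarrow x_i\sqsubseteq x_j$, and its supremum $\bigsqcup_i x_i$ belongs to $A$, then there is $i_0\in I$ such that $x_i\in A$ for all $i\ge i_0$. In particular, if $D$ is a continuous domain with basis $B\subseteq D$ and $x\in A$, then there exists $b\in B$ with $b\ll x$ and $\llbracket b,x]\subseteq A$.
   Context: A dcpo is a poset in which every nonempty directed subset has a supremum; its Scott topology consists of upsets $O$ such that every directed set with supremum in $O$ has an element in $O$. $\mathbf{\Sigma}^0_2(D)$: countable unions of sets $U\setminus V$ with $U,V$ Scott open. Way-below: $x\ll y$ iff for every directed $S$ with $y\sqsubseteq\sqcup S$ there is $s\in S$ with $x\sqsubseteq s$. A continuous domain with basis $B$ is a dcpo with $B\subseteq D$ such that for every $x$, $B\cap\{z:z\ll x\}$ is directed with supremum $x$. $\llbracket b,x]=\{y\in D: b\ll y\sqsubseteq x\}$. *)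

(* Defs.v *)
From Stdlib Require Import Classical.

Section Dcpo.
Variable D : Type.
Variable le : D -> D -> Prop.

Definition is_poset : Prop :=
  (forall x, le x x) /\
  (forall x y, le x y -> le y x -> x = y) /\
  (forall x y z, le x y -> le y z -> le x z).

Definition directed (S : D -> Prop) : Prop :=
  (exists x, S x) /\
  (forall x y, S x -> S y -> exists z, S z /\ le x z /\ le y z).

Definition is_sup (S : D -> Prop) (s : D) : Prop :=
  (forall x, S x -> le x s) /\
  (forall u, (forall x, S x -> le x u) -> le s u).

Definition is_dcpo : Prop :=
  is_poset /\ forall S, directed S -> exists s, is_sup S s.

Definition scott_open (O : D -> Prop) : Prop :=
  (forall x y, O x -> le x y -> O y) /\
  (forall S s, directed S -> is_sup S s -> O s -> exists x, S x /\ O x).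

Definition sigma02 (A : D -> Prop) : Prop :=
  exists U V : nat -> D -> Prop,
    (forall n, scott_open (U n)) /\ (forall n, scott_open (V n)) /\
    (forall x, A x <-> exists n, U n x /\ ~ V n x).

Definition way_below (x y : D) : Prop :=
  forall S s, directed S -> is_sup S s -> le y s -> exists z, S z /\ le x z.

Definition continuous_basis (B : D -> Prop) : Prop :=
  forall x, directed (fun z => B z /\ way_below z x) /\
            is_sup (fun z => B z /\ way_below z x) x.
End Dcpo.

Definition directed_preorder (I : Type) (leI : I -> I -> Prop) : Prop :=
  (forall i, leI i i) /\ (forall i j k, leI i j -> leI j k -> leI i k) /\
  (exists i : I, True) /\ (forall i j, exists k, leI i k /\ leI j k).

(* Main.v *)
Require Import Defs.

Theorem proposition4p4 (D : Type) (le : D -> D -> Prop) (A : D -> Prop) :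
  is_dcpo D le -> sigma02 D le A ->
  (forall (I : Type) (leI : I -> I -> Prop) (x : I -> D) (s : D),
     directed_preorder I leI ->
     (forall i j, leI i j -> le (x i) (x j)) ->
     is_sup D le (fun y => exists i, y = x i) s ->
     A s ->
     exists i0, forall i, leI i0 i -> A (x i)) /\
  (forall B : D -> Prop, continuous_basis D le B ->
     forall x, A x ->
     exists b, B b /\ way_below D le b x /\
       (forall y, way_below D le b y -> le y x -> A y)).
Proof.
  intros [[Hrefl [Hanti Htrans]] _] [U [V [HU [HV HA]]]].
  split.
  - intros I leI x s [_ [_ [[i1 _] Hdir]]] Hmon Hsup As.
    apply HA in As. destruct As as [n [Un Vn]].
    destruct (proj2 (HU n) (fun y => exists i, y = x i) s) as [y [[i0 ->] Hi0]]; auto.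
    + split. exists (x i1); eauto.
      intros a b [i ->] [j ->]. destruct (Hdir i j) as [k [Hk1 Hk2]].
      exists (x k); split; eauto.
    + exists i0. intros i Hi. apply HA. exists n. split.
      * apply (proj1 (HU n) (x i0)); auto.
      * intro Hv. apply Vn. apply (proj1 (HV n) (x i)); auto.
        apply (proj1 Hsup). eauto.
  - intros B HB x Ax. apply HA in Ax. destruct Ax as [n [Un Vn]].
    destruct (HB x) as [Hd Hs].
    destruct (proj2 (HU n) _ x Hd Hs Un) as [b [[Bb Wb] Ub]].
    exists b. split; [exact Bb|]. split; [exact Wb|].
    intros y Wy Hyx. apply HA. exists n. split.
    + apply (proj1 (HU n) b); auto.
      destruct (Wy (fun z => z = y) y) as [z [-> Hz]]; auto.
      * split. eauto. intros a c -> ->. exists y; auto.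
      * split. intros a ->; auto. intros u Hu; auto.
    + intro Hv. apply Vn. apply (proj1 (HV n) y); auto.
Qed.
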